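(* Every finite nonempty left-commutative semigroup, i.e. one satisfying $xya=yxa$ for all $x,y,a$, is $K$-thin.
   Context: For a finite nonempty semigroup $S$, the minimal ideal $K(S)$ is the intersection of all nonempty two-sided ideals of $S$. A Rees matrix semigroup $\mathcal{M}(H;I,J;p)$, for sets $I,J$, a group $H$ and a function $p\colon J\times I\to H$, is the set $I\times H\times J$ with product $(i,h,j)(i',h',j')=(i,h\,p(j,i')\,h',j')$. It is known that $K(S)$ is always isomorphic to such a Rees matrix semigroup with $H$ a finite group and $p$ normalized (i.e. $p(j_0,i)=e_H$ and $p(j,i_0)=e_H$ for some fixed $i_0\in I$, $j_0\in J$ and all $i,j$). $S$ is called $K$-thin if $K(S)$ has such a normalized Rees matrix structure with $|I|=1$ or $|J|=1$; equivalently, $K(S)$ is left-simple or right-simple. *)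

(* Defs.v *)
From mathcomp Require Import all_boot all_fingroup.
Set Implicit Arguments. Unset Strict Implicit. Unset Printing Implicit Defensive.

Definition associative_op (T : Type) (op : T -> T -> T) :=
  forall x y z, op x (op y z) = op (op x y) z.

Definition left_commutative_sg (T : Type) (op : T -> T -> T) :=
  forall x y a, op (op x y) a = op (op y x) a.

Definition is_ideal (T : finType) (op : T -> T -> T) (A : {set T}) : bool :=
  [forall x in A, forall y : T, (op x y \in A) && (op y x \in A)].

Definition minimal_ideal (T : finType) (op : T -> T -> T) : {set T} :=
  \bigcap_(A : {set T} | is_ideal op A && (A != set0)) A.

Definition rees_mul (gT : finGroupType) (I J : finType) (p : J -> I -> gT)
    (a b : I * gT * J) : I * gT * J :=
  (a.1.1, (a.1.2 * p a.2 b.1.1 * b.1.2)%g, b.2).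

(* K(S) is isomorphic to a Rees matrix semigroup M(H; I, J; p) with H a
   finite group (here the whole group gT) and p normalized. *)
Definition rees_iso_K (T : finType) (op : T -> T -> T) (gT : finGroupType)
    (I J : finType) (p : J -> I -> gT) (f : I * gT * J -> T) : Prop :=
  injective f /\
  (forall x, x \in minimal_ideal op <-> exists t, f t = x) /\
  (forall a b, f (rees_mul p a b) = op (f a) (f b)).

Definition normalized (gT : finGroupType) (I J : finType) (p : J -> I -> gT) :=
  exists (i0 : I) (j0 : J), (forall i, p j0 i = 1%g) /\ (forall j, p j i0 = 1%g).

Definition K_thin (T : finType) (op : T -> T -> T) : Prop :=
  exists (gT : finGroupType) (I J : finType) (p : J -> I -> gT)
         (f : I * gT * J -> T),
    normalized p /\ rees_iso_K op p f /\ (#|I| = 1 \/ #|J| = 1).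

(* Main.v *)
Require Import Defs.
From mathcomp Require Import all_boot all_fingroup.
Set Implicit Arguments. Unset Strict Implicit. Unset Printing Implicit Defensive.

Lemma idealP (T : finType) (op : T -> T -> T) (A : {set T}) :
  is_ideal op A <-> forall x y, x \in A -> op x y \in A /\ op y x \in A.
Proof.
split.
  move=> /forall_inP H x y /H /forallP /(_ y) /andP [] //.
move=> H; apply/forall_inP => x xA; apply/forallP => y; apply/andP; exact: H.
Qed.

Lemma min_ideal_spec (T : finType) (op : T -> T -> T) :
  0 < #|T| -> associative_op op ->
  [/\ is_ideal op (minimal_ideal op), minimal_ideal op != set0 &
      forall B, is_ideal op B -> B != set0 -> minimal_ideal op \subset B].
Proof.
move=> T0 assoc.
have hT : is_ideal op setT && (setT != set0 :> {set T}).
  apply/andP; split; first by apply/idealP => x y; rewrite !inE.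
  by apply/set0Pn; move: T0; rewrite -cardsT card_gt0 => /set0Pn [x _]; exists x; rewrite inE.
case: (@arg_minnP _ setT (fun A : {set T} => is_ideal op A && (A != set0)) (fun A : {set T} => #|A|) hT) => A /andP [iA nA] Amin.
have sub : forall B, is_ideal op B -> B != set0 -> A \subset B.
  move=> B iB nB.
  have iC : is_ideal op (A :&: B).
    apply/idealP => x y; rewrite inE => /andP [xA xB].
    have [h1 h2] := (idealP _ _).1 iA x y xA.
    have [h3 h4] := (idealP _ _).1 iB x y xB.
    by rewrite !inE h1 h2 h3 h4.
  have nC : A :&: B != set0.
    case/set0Pn: nA => a aA; case/set0Pn: nB => b bB.
    apply/set0Pn; exists (op a b); rewrite inE.
    by rewrite ((idealP _ _).1 iA a b aA).1 ((idealP _ _).1 iB b a bB).2.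
  have := Amin _ (introT andP (conj iC nC)).
  move=> le; have : A :&: B == A by rewrite eqEcard subsetIl le.
  by move/eqP <-; rewrite subsetIr.
have -> : minimal_ideal op = A.
  apply/eqP; rewrite eqEsubset; apply/andP; split.
    by rewrite /minimal_ideal; apply: bigcap_inf; rewrite iA nA.
  by apply/bigcapsP => B /andP [iB nB]; apply: sub.
by split.
Qed.

Definition lm (T : finType) (op : T -> T -> T) (K : {set T}) (x z : T) :=
  if (x \in K) && (z \in K) then op x z else z.

Lemma lm_inj (T : finType) (op : T -> T -> T) (K : {set T})
  (Hcl : forall x z, x \in K -> z \in K -> op x z \in K)
  (Hinj : forall x, x \in K -> {in K &, injective (op x)}) x :
  injective (lm op K x).
Proof.
move=> y z; rewrite /lm.
case xK: (x \in K) => /=; last by [].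
case yK: (y \in K); case zK: (z \in K) => //=.
- exact: Hinj.
- by move=> e; move: (Hcl x y xK yK); rewrite e zK.
- by move=> e; move: (Hcl x z xK zK); rewrite -e yK.
Qed.

Theorem proposition7p8 (T : finType) (op : T -> T -> T) :
  0 < #|T| -> associative_op op -> left_commutative_sg op -> K_thin op.
Proof.
move=> T0 assoc lc.
have [iK nK minK] := min_ideal_spec T0 assoc.
set K := minimal_ideal op in iK nK minK *.
have Hcl : forall x z, x \in K -> z \in K -> op x z \in K.
  by move=> x z xK _; exact: ((idealP _ _).1 iK x z xK).1.
have Hinj : forall x, x \in K -> {in K &, injective (op x)}.
  move=> x xK; apply/imset_injP.
  have iB : is_ideal op [set op x k | k in K].
    apply/idealP => a y /imsetP [k kK ->]; split.
      rewrite -assoc; apply/imsetP; exists (op k y) => //.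
      exact: ((idealP _ _).1 iK k y kK).1.
    rewrite assoc lc -assoc; apply/imsetP; exists (op y k) => //.
    exact: ((idealP _ _).1 iK k y kK).2.
  have nB : [set op x k | k in K] != set0.
    case/set0Pn: nK => k kK; apply/set0Pn; exists (op x k); exact: imset_f.
  have := minK _ iB nB => sKB.
  have sBK : [set op x k | k in K] \subset K.
    by apply/subsetP => a /imsetP [k kK ->]; exact: (Hcl _ _).
  have -> : [set op x k | k in K] = K by apply/eqP; rewrite eqEsubset sKB sBK.
  by [].
pose s x := perm (lm_inj (x:=x) Hcl Hinj).
have sK : forall x z, x \in K -> z \in K -> s x z = op x z.
  by move=> x z xK zK; rewrite permE /lm xK zK.
have sN : forall x z, z \notin K -> s x z = z.
  by move=> x z zK; rewrite permE /lm (negbTE zK) andbF.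
have smul : forall x y, x \in K -> y \in K -> s (op x y) = (s y * s x)%g.
  move=> x y xK yK; apply/permP => z; rewrite permM.
  case zK: (z \in K).
    have xyK := Hcl x y xK yK; have yzK := Hcl y z yK zK.
    by rewrite (sK _ _ xyK zK) (sK _ _ yK zK) (sK _ _ xK yzK) assoc.
  by rewrite !sN ?zK.
pose G := [set s x | x in K].
have GM : forall a b, a \in G -> b \in G -> (a * b)%g \in G.
  move=> a b /imsetP [x xK ->] /imsetP [y yK ->].
  by rewrite -smul //; apply: imset_f; exact: (Hcl _ _).
have pow : forall x, x \in K -> forall n, (s x ^+ n.+1)%g \in G.
  move=> x xK; elim=> [|n IH]; first by rewrite expg1; exact: imset_f.
  by rewrite expgS; apply: (GM _ _) => //; exact: imset_f.
have G1 : (1 : {perm T})%g \in G.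
  case/set0Pn: nK => k kK; rewrite -(expg_order (s k)).
  have := order_gt0 (s k); case: #[s k]%g => // n _; exact: (pow _ kK).
have gs : group_set G by apply/group_setP; split => // a b aG bG; exact: (GM _ _).
pose Gg := Group gs.
have Ginv : forall g, g \in G -> (g^-1)%g \in G.
  by move=> g gG; have := @groupV _ Gg g; rewrite /= => ->.
have [e eK se1] : exists2 e, e \in K & s e == 1%g.
  by case/imsetP: G1 => x xK e; exists x => //; rewrite -e.
have Gform : forall g : subg_of Gg, exists2 x, x \in K & ((sgval g)^-1)%g = s x.
  by move=> g; case/imsetP: (Ginv _ (subgP g)) => x xK ->; exists x.
have s1 : forall e z, s e = 1%g -> s e z = z by move=> e0 z ->; rewrite perm1.
have sabs : forall x e, x \in K -> e \in K -> s e = 1%g -> s (op x e) = s x.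
  by move=> x e0 xK e0K h; rewrite smul // h mul1g.
exists (subg_of Gg), unit, {x : T | (x \in K) && (s x == 1%g)}, (fun _ _ => 1%g),
  (fun t : unit * subg_of Gg * {x : T | (x \in K) && (s x == 1%g)} => (((sgval t.1.2)^-1)%g : {perm T}) (val t.2)).
split; [|split]; last by left; rewrite card_unit.
  exists tt, (exist _ e (introT andP (conj eK se1))); by split.
split; [|split].
- move=> [[u g] [e1 He1]] [[u' g'] [e2 He2]] /=.
  have /andP [e1K /eqP e1s] := He1; have /andP [e2K /eqP e2s] := He2.
  case: (Gform g) => x xK xE; case: (Gform g') => y yK yE.
  rewrite xE yE => eq.
  have sxy : s x = s y.
    by rewrite -(sabs x e1) // -(sabs y e2) // -(sK x e1) // -(sK y e2) // eq.
  have gg : g = g'.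
    by apply: val_inj; apply: invg_inj; rewrite /= xE yE sxy.
  subst g'; case: u; case: u'.
  have ee : e1 = e2 by apply: (@perm_inj _ (s x)); rewrite eq sxy.
  subst e2; congr (_, _, exist _ _ _); exact: bool_irrelevance.
- move=> k; split.
    move=> kK.
    have skG : ((s k)^-1)%g \in G by apply: Ginv; exact: imset_f.
    case/imsetP: skG => m mK mE.
    have mkK : op m k \in K := Hcl _ _ mK kK.
    have mks : s (op m k) == 1%g by rewrite smul // -mE mulgV.
    exists (tt, subg Gg ((s k)^-1)%g, exist _ (op m k) (introT andP (conj mkK mks))).
    rewrite /= subgK; last by rewrite /= mE; exact: imset_f.
    by rewrite invgK -sK // -permM -mE mulVg perm1.
  move=> [[[u g] [e1 He1]] <-] /=.
  have /andP [e1K _] := He1.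
  case: (Gform g) => x xK ->; rewrite sK //; exact: (Hcl _ _).
- move=> [[u g] [e1 He1]] [[u' g'] [e2 He2]] /=.
  have /andP [e1K /eqP e1s] := He1; have /andP [e2K /eqP e2s] := He2.
  rewrite mulg1 invMg permM.
  case: (Gform g) => x xK ->; case: (Gform g') => y yK ->.
  have yeK := Hcl _ _ yK e2K.
  rewrite !sK //.
  by rewrite -assoc -(sK e1) // s1.
Qed.
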